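(* Let $X$ be a real normed space of dimension at most $2$, $\mathcal M=\{M_1,\dots,M_n\}\subset\mathcal P^f_{\mathrm{Cl,Conv}}(X)$, $\Sigma(\mathcal M)\neq\emptyset$ and $d=(d_1,\dots,d_n)\in\Omega(\mathcal M)$. Then for every $K\in\Sigma_d(\mathcal M)$ there exists $i$ with $d_i=\sup_{x\in M_i}|x\,K|$.
   Context: For a metric space $X$, $p\in X$, $A\subset X$: $|p\,A|=\inf_{a\in A}|p\,a|$ ($=\infty$ if $A=\emptyset$); for $0\le r<\infty$, $B_r(A)=\{p:|p\,A|\le r\}$. For nonempty $A,B$, $d_H(A,B)=\max\{\sup_{a\in A}|a\,B|,\sup_{b\in B}|b\,A|\}\in[0,\infty]$. $\mathcal P_{\mathrm{Cl}}(X)$ is the set of nonempty closed subsets of $X$ with $d_H$; a finiteness class is an equivalence class of $A\sim B\iff d_H(A,B)<\infty$. $\mathcal P^f_{\mathrm{Cl,Conv}}(X)$ denotes a fixed finiteness class of the space of nonempty closed convex subsets of $X$ (a family of nonempty closed convex sets pairwise at finite Hausdorff distance, maximal with this property); let $\mathcal P^f_{\mathrm{Cl}}(X)$ be the finiteness class of $\mathcal P_{\mathrm{Cl}}(X)$ containing it. For $\mathcal M=\{M_1,\dots,M_n\}$ in it, $S_{\mathcal M}(Y)=\sum_i d_H(Y,M_i)$; $\Sigma(\mathcal M)$ is the set of minimizers of $S_{\mathcal M}$ over $\mathcal P^f_{\mathrm{Cl}}(X)$; for $K\in\Sigma(\mathcal M)$, $d(K)=(d_H(K,M_1),\dots,d_H(K,M_n))$;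 $\Omega(\mathcal M)=\{d(K):K\in\Sigma(\mathcal M)\}$; for $d\in\Omega(\mathcal M)$, $\Sigma_d(\mathcal M)=\{K\in\Sigma(\mathcal M):d(K)=d\}$. *)

(* Defs.v *)
From HB Require Import structures.
From mathcomp Require Import all_boot all_order all_algebra.
From mathcomp Require Import all_classical all_reals all_analysis.
Set Implicit Arguments. Unset Strict Implicit. Unset Printing Implicit Defensive.
Import Order.TTheory GRing.Theory Num.Theory.
Import numFieldNormedType.Exports.
Local Open Scope classical_set_scope.
Local Open Scope ring_scope.

Definition dim_le2 (R : realType) (X : normedModType R) : Prop :=
  exists v1 v2 : X, forall x : X, exists a b : R, x = a *: v1 + b *: v2.

Definition convexS (R : realType) (X : normedModType R) (A : set X) : Prop :=
  forall x y (t : R), A x -> A y -> 0 <= t -> t <= 1 ->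
    A (t *: x + (1 - t) *: y).

(* |p A| = inf_{a in A} |p - a|, in [0, +oo] (= +oo for A empty) *)
Definition distPS (R : realType) (X : normedModType R) (p : X) (A : set X)
  : \bar R := ereal_inf [set (`|p - a|)%:E | a in A].

Definition hausd (R : realType) (X : normedModType R) (A B : set X) : \bar R :=
  Order.max (ereal_sup [set distPS a B | a in A])
            (ereal_sup [set distPS b A | b in B]).

(* the finiteness class P^f_Cl(X) determined by the family M:
   nonempty closed sets at finite Hausdorff distance from the M_i *)
Definition admissible (R : realType) (X : normedModType R) (n : nat)
  (M : 'I_n -> set X) (Y : set X) : Prop :=
  closed Y /\ Y !=set0 /\ (forall i, (hausd Y (M i) < +oo)%E).

Definition SM (R : realType) (X : normedModType R) (n : nat)
  (M : 'I_n -> set X) (Y : set X) : \bar R :=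
  (\sum_(i < n) hausd Y (M i))%E.

Definition inSigma (R : realType) (X : normedModType R) (n : nat)
  (M : 'I_n -> set X) (K : set X) : Prop :=
  admissible M K /\ forall Y, admissible M Y -> (SM M K <= SM M Y)%E.

(* Main.v *)
Require Import Defs.
From HB Require Import structures.
From mathcomp Require Import all_boot all_order all_algebra.
From mathcomp Require Import all_classical all_reals all_analysis.
From mathcomp Require Import ring lra.
Import Order.TTheory GRing.Theory Num.Theory.
Import numFieldNormedType.Exports.
Local Open Scope classical_set_scope.
Local Open Scope ring_scope.

Section H.
Variables (R : realType) (X : normedModType R).
Implicit Types (p q a : X) (A : set X).

Definition dist (p : X) (A : set X) : R := fine (distPS p A).

Lemma distPS_ge0 (p : X) A : (0 <= distPS p A)%E.
Proof. by apply: le_ereal_inf_tmp => _ [a _ <-]; rewrite lee_fin. Qed.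

Lemma distPS_le p a A : A a -> (distPS p A <= (`|p - a|)%:E)%E.
Proof. by move=> Aa; apply: ereal_inf_lbound; exists a. Qed.
Arguments distPS_le p [a A].

Lemma distPSE (p : X) A : A !=set0 -> distPS p A = (dist p A)%:E.
Proof.
move=> [a Aa]; rewrite /dist fineK // ge0_fin_numE ?distPS_ge0 //.
by rewrite (le_lt_trans (distPS_le p Aa)) // ltry.
Qed.

Lemma dist_ge0 (p : X) A : 0 <= dist p A.
Proof. by rewrite /dist fine_ge0 // distPS_ge0. Qed.

Lemma dist_le p a A : A a -> dist p A <= `|p - a|.
Proof.
move=> Aa; have := distPS_le p Aa; rewrite (@distPSE p A (ex_intro _ a Aa)).
by rewrite lee_fin.
Qed.
Arguments dist_le p [a A].

Lemma dist_approx (p : X) A (e : R) : A !=set0 -> 0 < e ->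
  exists2 a, A a & `|p - a| < dist p A + e.
Proof.
move=> A0 e0.
have : (distPS p A < (dist p A + e)%:E)%E by rewrite distPSE // lte_fin ltrDl.
by move/ereal_inf_lt => [_ [a Aa <-]]; rewrite lte_fin => h; exists a.
Qed.
Arguments dist_approx p [A e].

Lemma dist_lip (p q : X) A : A !=set0 -> dist p A <= dist q A + `|p - q|.
Proof.
move=> A0; apply/ler_addgt0Pr => e e0.
have [a Aa ha] := dist_approx q A0 e0.
apply: le_trans (dist_le p Aa) _.
have : `|p - a| <= `|p - q| + `|q - a|.
  by have := ler_normD (p - q) (q - a); rewrite addrA subrK.
move=> h; apply: le_trans h _.
by rewrite addrAC addrC lerD2l; exact: ltW.
Qed.


Lemma dist_convex p q A (t : R) : convexS A -> A !=set0 -> 0 <= t -> t <= 1 ->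
  dist (t *: p + (1 - t) *: q) A <= t * dist p A + (1 - t) * dist q A.
Proof.
move=> cA A0 t0 t1; apply/ler_addgt0Pr => e e0.
have [a Aa ha] := dist_approx p A0 e0.
have [b Ab hb] := dist_approx q A0 e0.
have t10 : 0 <= 1 - t by rewrite subr_ge0.
have := dist_le (t *: p + (1 - t) *: q) (cA _ _ _ Aa Ab t0 t1).
move=> H; apply: (le_trans H).
have -> : t *: p + (1 - t) *: q - (t *: a + (1 - t) *: b) =
  t *: (p - a) + (1 - t) *: (q - b).
  by rewrite !scalerBr opprD !addrA; congr (_ + _); rewrite addrAC.
apply: le_trans (ler_normD _ _) _.
rewrite !normrZ !ger0_norm //.
have -> : t * dist p A + (1 - t) * dist q A + e =
  t * (dist p A + e) + (1 - t) * (dist q A + e).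
  by rewrite !mulrDr addrACA -mulrDl subrKC mul1r.
by apply: lerD; apply: ler_wpM2l => //; apply: ltW.
Qed.

Lemma closed_dist A (r : R) : A !=set0 -> closed [set p | dist p A <= r].
Proof.
move=> A0 p clp; apply/ler_addgt0Pr => e e0.
have [q [/= hq bq]] := clp _ (nbhsx_ballx p e e0).
move: bq; rewrite -ball_normE /= => bq.
apply: le_trans (dist_lip p q A A0) _.
by apply: lerD => //; apply: ltW.
Qed.

End H.
Arguments dist {R X}.
Arguments distPS_ge0 {R X}.
Arguments distPS_le {R X} p [a A].
Arguments distPSE {R X}.
Arguments dist_ge0 {R X}.
Arguments dist_le {R X} p [a A].
Arguments dist_approx {R X} p [A e].
Arguments dist_lip {R X}.
Arguments dist_convex {R X}.
Arguments closed_dist {R X}.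

Section Main.
Variables (R : realType) (X : normedModType R).

Lemma distPS_sup_ge0 (A B : set X) : A !=set0 ->
  (0 <= ereal_sup [set distPS x B | x in A])%E.
Proof.
move=> [x Ax]; apply: le_trans (distPS_ge0 x B) _.
by apply: ereal_sup_ubound; exists x.
Qed.

End Main.
Arguments distPS_sup_ge0 {R X}.

Theorem mainTheorem17 (R : realType) (X : normedModType R) (n : nat)
  (M : 'I_n -> set X) :
  dim_le2 X ->
  (0 < n)%N ->
  injective M ->
  (forall i, closed (M i) /\ convexS (M i) /\ M i !=set0) ->
  (forall i j, (hausd (M i) (M j) < +oo)%E) ->
  (exists K0, inSigma M K0) ->
  forall d : 'I_n -> \bar R,
  (exists K1, inSigma M K1 /\ forall i, hausd K1 (M i) = d i) ->
  forall K : set X, inSigma M K -> (forall i, hausd K (M i) = d i) ->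
  exists i : 'I_n, d i = ereal_sup [set distPS x K | x in M i].
Proof.
move=> _ n0 _ hM _ _ d _ K [[Kcl [K0 Kfin]] Kmin] hKd.
apply: contrapT => hno.
have hne i : d i != ereal_sup [set distPS x K | x in M i].
  by apply/eqP => h; apply: hno; exists i.
pose a i := ereal_sup [set distPS x K | x in M i].
pose b i := ereal_sup [set distPS k (M i) | k in K].
have M0 i : M i !=set0 := (hM i).2.2.
have a0 i : (0 <= a i)%E by apply: distPS_sup_ge0.
have b0 i : (0 <= b i)%E by apply: distPS_sup_ge0.
have hK i : hausd K (M i) = Order.max (b i) (a i) by [].
have aoo i : (a i < +oo)%E.
  by apply: le_lt_trans (Kfin i); rewrite hK le_max lexx orbT.
have boo i : (b i < +oo)%E.
  by apply: le_lt_trans (Kfin i); rewrite hK le_max lexx.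
have ab i : (a i < b i)%E.
  rewrite ltNge; apply/negP => hba; move: (hne i); rewrite -hKd hK max_r //.
  by rewrite eqxx.
pose A i := fine (a i).
pose D i := fine (b i).
have aE i : a i = (A i)%:E by rewrite /A fineK // ge0_fin_numE.
have bE i : b i = (D i)%:E by rewrite /D fineK // ge0_fin_numE.
have hKD i : hausd K (M i) = (D i)%:E.
  by rewrite hK max_l; [exact: bE | exact: ltW (ab i)].
have AD i : A i < D i by rewrite -lte_fin -aE -bE.
have A0 i : 0 <= A i by rewrite -lee_fin -aE.
have F1 i k : K k -> dist k (M i) <= D i.
  move=> Kk; rewrite -lee_fin -bE -distPSE //.
  by apply: ereal_sup_ubound; exists k.
have F2 i x : M i x -> dist x K <= A i.
  move=> Mx; rewrite -lee_fin -aE -distPSE //.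
  by apply: ereal_sup_ubound; exists x.
pose j0 : 'I_n := Ordinal n0.
case: (@arg_minP _ _ _ j0 xpredT (fun i => D i - A i) erefl) => i0 _ hmin.
pose mu := D i0 - A i0.
have mu0 : 0 < mu by rewrite subr_gt0.
have muD i : mu <= D i - A i by exact: hmin.
pose Rr := 2 * D j0 + 1.
pose g := (D j0 - A j0) / 2.
pose lam := mu / (2 * Rr).
have hA0 := A0 j0; have hAD := AD j0; have hmu := muD j0.
have Rr0 : 0 < Rr by rewrite /Rr; lra.
have g0 : 0 < g by rewrite /g; lra.
have lamR : lam * Rr = mu / 2 by rewrite /lam; field; rewrite gt_eqF.
have lam0 : 0 < lam by rewrite /lam divr_gt0 // mulr_gt0.
have lam1 : lam <= 1.
  rewrite /lam ler_pdivrMr ?mulr_gt0 // mul1r; rewrite /Rr; lra.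
pose K' := [set p | (forall i, dist p (M i) <= D i) /\ dist p (M j0) <= D j0 - lam * g].
have K'cl : closed K'.
  suff -> : K' = \bigcap_(i in [set: 'I_n]) [set p | dist p (M i) <= D i] `&`
      [set p | dist p (M j0) <= D j0 - lam * g].
    apply: closedI; last exact: closed_dist.
    by apply: closed_bigI => i _; exact: closed_dist.
  apply/seteqP; split => p [h1 h2]; split => //.
    by move=> i _; exact: h1.
  by move=> i; exact: h1.
have key k : K k -> exists2 p, K' p & `|k - p| <= mu / 2.
  move=> Kk.
  have [y My hy] := dist_approx k (M0 j0) (@ltr01 R).
  have [k' Kk' hk'] := dist_approx y K0 g0.
  have hyK := F2 _ _ My.
  have hkM := F1 j0 _ Kk.
  have dk' : dist k' (M j0) <= D j0 - g.
    apply: le_trans (dist_le k' My) _; rewrite distrC.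
    rewrite /g in hk' *; lra.
  have lam0' : 0 <= 1 - lam by rewrite subr_ge0.
  have lam1' : 1 - lam <= 1 by rewrite gerBl ltW.
  have e1 : 1 - (1 - lam) = lam by ring.
  exists ((1 - lam) *: k + (1 - (1 - lam)) *: k').
    split.
      move=> i; apply: le_trans (dist_convex _ _ _ _ (hM i).2.1 (M0 i) lam0' lam1') _.
      rewrite e1; have := F1 i _ Kk; have := F1 i _ Kk'.
      move=> h1 h2; apply: le_trans (_ : (1 - lam) * D i + lam * D i <= _); last by lra.
      by apply: lerD; apply: ler_wpM2l => //; apply: ltW.
    apply: le_trans (dist_convex _ _ _ _ (hM j0).2.1 (M0 j0) lam0' lam1') _.
    rewrite e1.
    apply: le_trans (_ : (1 - lam) * D j0 + lam * (D j0 - g) <= _); last by lra.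
    by apply: lerD; apply: ler_wpM2l => //; apply: ltW.
  have -> : k - ((1 - lam) *: k + (1 - (1 - lam)) *: k') = lam *: (k - k').
    rewrite e1 scalerBl scale1r scalerBr.
    by rewrite opprD opprB addrA addrCA subrr addr0.
  rewrite normrZ (ger0_norm (ltW lam0)) -lamR ler_pM2l //.
  have : `|k - k'| <= `|k - y| + `|y - k'|.
    by have := ler_normD (k - y) (y - k'); rewrite addrA subrK.
  move=> h; apply: le_trans h _; rewrite /Rr /g in hk' *; lra.
have K'0 : K' !=set0.
  by case: K0 => k Kk; have [p Kp _] := key k Kk; exists p.
have bK' i : (ereal_sup [set distPS p (M i) | p in K'] <= (D i)%:E)%E.
  apply: ge_ereal_sup => _ [p [hp _] <-]; rewrite distPSE // lee_fin; exact: hp.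
have bK'0 : (ereal_sup [set distPS p (M j0) | p in K'] <= (D j0 - lam * g)%:E)%E.
  apply: ge_ereal_sup => _ [p [_ hp] <-]; rewrite distPSE // lee_fin; exact: hp.
have aK' i : (ereal_sup [set distPS x K' | x in M i] <= (A i + mu / 2)%:E)%E.
  apply: ge_ereal_sup => _ [x Mx <-]; rewrite distPSE // lee_fin.
  apply/ler_addgt0Pr => e e0.
  have [k Kk hk] := dist_approx x K0 e0.
  have [p Kp hp] := key k Kk.
  apply: le_trans (dist_le x Kp) _.
  have := ler_normD (x - k) (k - p); rewrite addrA subrK => h.
  apply: le_trans h _; have := F2 _ _ Mx; lra.
have H'le i : (hausd K' (M i) <= (D i)%:E)%E.
  rewrite /hausd ge_max bK' /=; apply: le_trans (aK' i) _.
  by rewrite lee_fin; have := muD i; lra.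
have H'lt : (hausd K' (M j0) < (D j0)%:E)%E.
  rewrite /hausd gt_max; apply/andP; split.
    apply: le_lt_trans bK'0 _; rewrite lte_fin; have := mulr_gt0 lam0 g0; lra.
  by apply: le_lt_trans (aK' j0) _; rewrite lte_fin; lra.
have H'0 i : (0 <= hausd K' (M i))%E.
  by rewrite /hausd le_max distPS_sup_ge0.
have hf i : (fine (hausd K' (M i)))%:E = hausd K' (M i).
  by rewrite fineK // ge0_fin_numE // (le_lt_trans (H'le i)) ?ltry.
have adm : admissible M K'.
  by split; [|split] => // i; apply: le_lt_trans (H'le i) (ltry _).
have := Kmin K' adm; rewrite /SM.
rewrite (eq_bigr (fun i => (D i)%:E)); last by move=> i _; exact: hKD.
have e2 : (\sum_(i < n) hausd K' (M i) = \sum_(i < n) (fine (hausd K' (M i)))%:E)%E.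
  by apply: eq_bigr => i _; rewrite hf.
rewrite e2.
rewrite !sumEFin lee_fin; apply/negP; rewrite -ltNge.
rewrite (bigD1 j0) //= [X in _ < X](bigD1 j0) //=.
apply: ltr_leD; first by rewrite -lte_fin hf.
by apply: ler_sum => i _; rewrite -lee_fin hf.
Qed.
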